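(* Let $G$ be a partial cube in which every convex cycle is a $4$-cycle, and let $P=v_0v_1\cdots v_l$ ($l\geqslant 1$) be a path in $G$. If $P$ is of type-I, then $P$ is a shortest $v_0,v_l$-path (geodesic) in $G$.
   Context: A partial cube is a connected graph isomorphic to an isometric subgraph of a hypercube. A subgraph $H$ is convex if for all $u,v\in V(H)$ every shortest $u,v$-path of $G$ lies in $H$; a convex cycle is a cycle that is a convex subgraph. The Djoković–Winkler relation $\Theta$ on edges: $uv\,\Theta\,xy$ iff $d(u,x)+d(v,y)\neq d(u,y)+d(v,x)$; in a partial cube it is an equivalence relation, and $F_e$ denotes the $\Theta$-class of edge $e$. For a vertex $v$, $\mathcal{F}(v)=\{F_e: e \text{ is an edge incident with } v\}$. With $e_i=v_{i-1}v_i$ ($1\leqslant i\leqslant l$), the path $P=v_0v_1\cdots v_l$ ($l\geqslant 1$) is of type-I if $\mathcal{F}(v_0)\setminus\mathcal{F}(v_1)\neq\emptyset$, $\mathcal{F}(v_l)\setminus\mathcal{F}(v_{l-1})\neq\emptyset$, and for every $1\leqslant i\leqslant l-1$: $F_{e_{i+1}}\notin\mathcal{F}(v_{i-1})$ and $F_{e_i}\notin\mathcal{F}(v_{i+1})$. *)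

(* Defs.v *)
From mathcomp Require Import all_boot.
Set Implicit Arguments. Unset Strict Implicit. Unset Printing Implicit Defensive.

(* A finite simple graph: vertex type T : finType, adjacency e : rel T,
   assumed symmetric and irreflexive (hypotheses in the theorem). *)

Section Graph.
Variables (T : finType) (e : rel T).

Definition walkn (u v : T) (n : nat) : bool :=
  [exists t : n.-tuple T, path e u t && (last u t == v)].

(* graph distance: least n with a walk of length n from u to v
   (shortest walks have < #|T| edges; equals #|T| iff v unreachable) *)
Definition dist (u v : T) : nat := find (walkn u v) (iota 0 #|T|).

Definition connected : Prop := forall u v : T, connect e u v.

Definition shortest_path (u : T) (p : seq T) (v : T) : Prop :=
  path e u p /\ last u p = v /\ size p = dist u v.

Definition theta (f g : T * T) : bool :=
  dist f.1 g.1 + dist f.2 g.2 != dist f.1 g.2 + dist f.2 g.1.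

(* F_f \in F(w): some edge incident with w is Theta-related to f *)
Definition inF (f : T * T) (w : T) : bool :=
  [exists w', e w w' && theta (w, w') f].

Definition is_cycle (c : seq T) : Prop :=
  [/\ uniq c, 3 <= size c & cycle e c].

Definition cycle_edge (c : seq T) (x y : T) : bool :=
  (x \in c) && (y \in c) && ((next c x == y) || (next c y == x)).

Definition convex_cycle (c : seq T) : Prop :=
  is_cycle c /\
  forall u v p, u \in c -> v \in c -> shortest_path u p v ->
    all (fun x => x \in c) (u :: p) /\ path (cycle_edge c) u p.

Definition qadj (n : nat) : rel {ffun 'I_n -> bool} :=
  fun x y => #|[pred i | x i != y i]| == 1.

End Graph.

Definition partial_cube (T : finType) (e : rel T) : Prop :=
  connected e /\
  exists (n : nat) (f : T -> {ffun 'I_n -> bool}),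
    forall u v, dist e u v = dist (@qadj n) (f u) (f v).

Definition typeI (T : finType) (e : rel T) (v0 : T) (p : seq T) : Prop :=
  let l := size p in
  let v := fun i => nth v0 (v0 :: p) i in
  [/\ exists w, e (v 0) w && ~~ inF e (v 0, w) (v 1),
      exists w, e (v l) w && ~~ inF e (v l, w) (v l.-1)
    & forall i, 1 <= i <= l.-1 ->
        ~~ inF e (v i, v i.+1) (v i.-1) /\ ~~ inF e (v i.-1, v i) (v i.+1)].

(* Main.v *)
Require Import Defs.
From mathcomp Require Import all_boot zify.
Set Implicit Arguments. Unset Strict Implicit. Unset Printing Implicit Defensive.


Section Cube.
Variable n : nat.
Local Notation code := {ffun 'I_n -> bool}.

Definition flip (i : 'I_n) (x : code) : code := [ffun j => x j (+) (j == i)].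
Definition ham (x y : code) : nat := #|[pred i | x i != y i]|.

Lemma flipE i x j : flip i x j = x j (+) (j == i).
Proof. by rewrite ffunE. Qed.

Lemma flipK i x : flip i (flip i x) = x.
Proof. by apply/ffunP=> j; rewrite !flipE -addbA addbb addbF. Qed.

Lemma flipC i j x : flip i (flip j x) = flip j (flip i x).
Proof. by apply/ffunP=> l; rewrite !flipE -!addbA (addbC (l == j)). Qed.

Lemma hamE x y : ham x y = \sum_i (x i != y i).
Proof. by rewrite /ham -sum1_card big_mkcond /=; apply: eq_bigr => i _; rewrite inE; case: (x i != y i). Qed.

Lemma hamC x y : ham x y = ham y x.
Proof. by rewrite !hamE; apply: eq_bigr => i _; rewrite eq_sym. Qed.

Lemma ham0 x y : (ham x y == 0) = (x == y).
Proof.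
apply/idP/eqP => [|->]; last by rewrite /ham; apply/eqP/eq_card0 => i; rewrite inE eqxx.
rewrite /ham => /eqP/card0_eq H; apply/ffunP => i; have := H i; rewrite inE.
by move/negbFE/eqP.
Qed.

Lemma ham_tri x y z : ham x z <= ham x y + ham y z.
Proof.
rewrite !hamE -big_split /=; apply: leq_sum => i _.
by case: (x i) (y i) (z i) => [] [] [].
Qed.

Lemma ham_tri2 (x y z : code) i : x i = z i -> y i != x i -> (ham x z).+2 <= ham x y + ham y z.
Proof.
move=> Hxz Hy; rewrite !hamE -big_split /= (bigD1 i) //= [X in _ <= X](bigD1 i) //=.
rewrite Hxz eqxx /= -Hxz eq_sym Hy /= -addSn -add2n; apply: leq_add => //.
apply: leq_sum => j _; by case: (x j) (y j) (z j) => [] [] [].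
Qed.

Lemma ham_flip_same (x y : code) i : x i = y i -> ham x (flip i y) = (ham x y).+1.
Proof.
move=> H; rewrite !hamE (bigD1 i) //= [in RHS](bigD1 i) //= flipE eqxx H.
case: (y i) => /=; rewrite add1n; congr S; apply: eq_bigr => j /negbTE ji;
by rewrite flipE ji addbF.
Qed.

Lemma ham_flip_diff (x y : code) i : x i != y i -> (ham x (flip i y)).+1 = ham x y.
Proof.
move=> H; rewrite !hamE (bigD1 i) //= [in RHS](bigD1 i) //= flipE eqxx H.
move: H; case: (x i) (y i) => [] [] //= _; rewrite !add0n add1n; congr S; apply: eq_bigr => j /negbTE ji;
by rewrite flipE ji addbF.
Qed.

Lemma ham_flip1 x i : ham x (flip i x) = 1.
Proof. by rewrite ham_flip_same //; have /eqP -> : ham x x == 0 by rewrite ham0. Qed.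

Lemma ham1 x y : ham x y = 1 -> exists i, y = flip i x.
Proof.
move=> H; case: (pickP [pred i | x i != y i]) => [i /= Hi| H0]; last first.
  by move: H; rewrite /ham eq_card0 // => j; rewrite !inE H0.
exists i; have := ham_flip_diff Hi; rewrite H => -[] /eqP; rewrite ham0 => /eqP ->.
by rewrite flipK.
Qed.

Lemma ham_le_n x y : ham x y <= n.
Proof. by apply: leq_trans (max_card _) _; rewrite card_ord. Qed.

End Cube.


Section G.
Variables (T : finType) (e : rel T).

Lemma walknP u v m : reflect (exists p, [/\ path e u p, last u p = v & size p = m]) (walkn e u v m).
Proof.
apply: (iffP existsP) => [[t /andP [Hp /eqP Hl]]|[p [Hp Hl Hs]]].
  by exists t; rewrite size_tuple.
have Hs' : size p == m by rewrite Hs.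
by exists (Tuple Hs') => /=; rewrite Hp Hl eqxx.
Qed.

Lemma dist_le u p : path e u p -> dist e u (last u p) <= size p.
Proof.
move=> Hp; rewrite /dist; case: (ltnP (size p) #|T|) => Hlt; last first.
  by apply: leq_trans (find_size _ _) _; rewrite size_iota.
rewrite leqNgt; apply/negP => Hf; have := before_find 0 Hf.
rewrite nth_iota // add0n => /negbT /negP; apply; apply/walknP; by exists p.
Qed.

Lemma dist_walk u v : dist e u v < #|T| -> exists p, [/\ path e u p, last u p = v & size p = dist e u v].
Proof.
move=> H; apply/walknP; move: H; rewrite /dist => H.
have Hh : has (walkn e u v) (iota 0 #|T|) by rewrite has_find size_iota.
have := nth_find 0 Hh; by rewrite nth_iota.
Qed.

Lemma dist_conn u v : connect e u v -> dist e u v < #|T|.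
Proof.
move=> /connectP [p Hp ->]; case: (shortenP Hp) => p' Hp' Hu _.
apply: leq_ltn_trans (dist_le Hp') _.
have := card_uniqP Hu => /= <-; exact: max_card.
Qed.

Lemma dist_refl u : dist e u u = 0.
Proof. by apply/eqP; rewrite -leqn0 (dist_le (p := [::])). Qed.

Lemma dist0 u v : dist e u v = 0 -> u = v.
Proof.
move=> H; have Hlt : dist e u v < #|T| by rewrite H; apply/card_gt0P; exists u.
have [p [_ Hl Hs]] := dist_walk Hlt; rewrite H in Hs; by case: p Hs Hl => //= _ <-.
Qed.

Lemma dist_edge u v : u != v -> e u v -> dist e u v = 1.
Proof.
move=> Huv Huv'; apply/eqP; rewrite eqn_leq (dist_le (p := [:: v])) /= ?Huv' //.
by rewrite lt0n; apply/eqP => /dist0 /eqP; rewrite (negbTE Huv).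
Qed.

Lemma dist1_edge u v : dist e u v = 1 -> 1 < #|T| -> e u v.
Proof.
move=> H HT; have Hlt : dist e u v < #|T| by rewrite H.
have [[|x [|y p]] [/= Hp Hl Hs]] := dist_walk Hlt; rewrite H // in Hs.
by move: Hp; rewrite -Hl andbT.
Qed.

End G.

Section QD.
Variable n : nat.
Local Notation code := {ffun 'I_n -> bool}.

Lemma qadjE (x y : code) : qadj x y = (ham x y == 1).
Proof. by []. Qed.

Lemma qwalk_ham (x : code) p : path (@qadj n) x p -> ham x (last x p) <= size p.
Proof.
elim: p x => [|y p IH] x /=; first by rewrite leqn0 ham0.
move=> /andP [/eqP Hxy Hp]; have {}Hxy : ham x y = 1 := Hxy.
apply: leq_trans (ham_tri x y _) _.
by rewrite Hxy add1n ltnS IH.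
Qed.

Lemma qwalk_ex (x y : code) : exists p, [/\ path (@qadj n) x p, last x p = y & size p = ham x y].
Proof.
move Hh : (ham x y) => h; elim: h x Hh => [|h IH] x Hh.
  by exists [::]; move/eqP: Hh; rewrite ham0 => /eqP ->.
case: (pickP [pred i | x i != y i]) => [i /= Hi| H0]; last first.
  by move: Hh; rewrite /ham eq_card0 // => j; rewrite !inE H0.
have Hi' : y i != x i by rewrite eq_sym.
have := ham_flip_diff Hi'; rewrite [ham y x]hamC Hh hamC => -[] Hh'.
have [p [Hp Hl Hs]] := IH _ Hh'.
exists (flip i x :: p); split => //=; last by rewrite Hs.
by rewrite Hp andbT qadjE ham_flip1.
Qed.

Lemma qdist (x y : code) : dist (@qadj n) x y = ham x y.
Proof.
have [p [Hp Hl Hs]] := qwalk_ex x y.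
apply/eqP; rewrite eqn_leq -{1}Hs -{1}Hl dist_le //=.
rewrite leqNgt; apply/negP => Hlt.
have HT : dist (@qadj n) x y < #|{ffun 'I_n -> bool}|.
  apply: (leq_trans Hlt); apply: (leq_trans (ham_le_n x y)).
  by rewrite card_ffun card_bool card_ord ltnW // ltn_expl.
have [q [Hq Hlq Hsq]] := dist_walk HT.
by have := qwalk_ham Hq; rewrite Hlq Hsq leqNgt Hlt.
Qed.
End QD.


Lemma ham_flip2 n (a b : {ffun 'I_n -> bool}) c : ham (flip c a) (flip c b) = ham a b.
Proof.
rewrite !hamE; apply: eq_bigr => j _; rewrite !flipE.
by case: (a j) (b j) (j == c) => [] [] [].
Qed.

Section PC.
Variables (T : finType) (e : rel T) (n : nat) (f : T -> {ffun 'I_n -> bool}).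
Hypothesis esym : symmetric e.
Hypothesis eirr : irreflexive e.
Hypothesis econn : connected e.
Hypothesis Hf : forall u v, dist e u v = ham (f u) (f v).

Lemma f_inj u v : f u = f v -> u = v.
Proof. by move=> H; apply: (dist0 (e := e)); rewrite Hf H; apply/eqP; rewrite ham0. Qed.

Lemma edge_ham u v : e u v -> ham (f u) (f v) = 1.
Proof.
move=> H; rewrite -Hf dist_edge //; apply/eqP => Huv; subst.
by rewrite eirr in H.
Qed.

Lemma ham_edge u v : ham (f u) (f v) = 1 -> e u v.
Proof.
move=> H; rewrite -Hf in H; have HT : 1 < #|T| by rewrite -H; apply: dist_conn.
exact: dist1_edge H HT.
Qed.

Lemma path_ham u p : path e u p -> ham (f u) (f (last u p)) <= size p.
Proof. by move=> Hp; rewrite -Hf; apply: dist_le. Qed.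

Lemma geostep u v : u != v -> exists w, e u w /\ (ham (f w) (f v)).+1 = ham (f u) (f v).
Proof.
move=> Huv; have [p [Hp Hl Hs]] := dist_walk (dist_conn (econn u v)).
case: p Hp Hl Hs => [|w p] /=.
  by move=> _ Hl; move: Huv; rewrite Hl eqxx.
move=> /andP [Huw Hp] Hl Hs; exists w; split => //.
apply/eqP; rewrite eqn_leq; apply/andP; split.
  by rewrite -(Hf u v) -Hs ltnS -Hl -Hf dist_le.
by apply: leq_trans (ham_tri _ (f w) _) _; rewrite edge_ham.
Qed.

Definition inV (x : {ffun 'I_n -> bool}) := [exists u, f u == x].

Lemma inVf u : inV (f u).
Proof. by apply/existsP; exists u. Qed.

Lemma inVP x : reflect (exists u, f u = x) (inV x).
Proof. by apply: (iffP existsP) => [[u /eqP]|[u <-]]; exists u. Qed.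

Lemma vstep (x y : {ffun 'I_n -> bool}) : inV x -> inV y -> x != y ->
  exists i, x i != y i /\ inV (flip i x).
Proof.
move=> /inVP [u <-] /inVP [v <-] Hxy.
have Huv : u != v by apply: contra Hxy => /eqP ->.
have [w [Huw Hh]] := geostep Huv.
have [i Hi] := ham1 (edge_ham Huw).
exists i; split; last by rewrite -Hi inVf.
apply/negP => /eqP Heq; move: Hh; rewrite Hi hamC ham_flip_same // hamC.
lia.
Qed.

Lemma inF_sq x y w c : e x y -> f y = flip c (f x) -> inV (flip c (f w)) -> inF e (x, y) w.
Proof.
move=> Hxy Hy /inVP [w' Hw']; apply/existsP; exists w'.
rewrite ham_edge ?Hw' ?ham_flip1 //= /theta /= !Hf Hw' Hy ham_flip2.
have Hs : forall a b : {ffun 'I_n -> bool}, ham (flip c a) b = ham a (flip c b).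
  by move=> a b; rewrite -{2}(flipK c a) ham_flip2.
rewrite Hs; case: (boolP (f w c == f x c)) => [/eqP Hc|Hc].
  by rewrite ham_flip_same //; apply/eqP; lia.
by have := ham_flip_diff Hc => <-; apply/eqP; lia.
Qed.

End PC.


Lemma mod_shift k i x : 0 < x < k -> (i + x) %% k != i %% k.
Proof.
move=> /andP [Hx Hxk]; apply/negP => H.
have : (i + x == i + 0 %[mod k]) by rewrite addn0; apply/eqP; exact/eqP.
by rewrite eqn_modDl mod0n modn_small //; lia.
Qed.

Lemma mod_find k t j : j < k -> exists r, r < k /\ (t + r) %% k = j.
Proof.
move=> Hj; have Hk : 0 < k by lia.
exists ((j + k - t %% k) %% k); split; first by rewrite ltn_mod.
rewrite modnDmr {1}(divn_eq t k) -addnA.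
have -> : t %% k + (j + k - t %% k) = j + k by have := ltn_pmod t Hk; lia.
by rewrite modnMDl modnDr modn_small.
Qed.

Section Comb.
Variable n : nat.
Local Notation code := {ffun 'I_n -> bool}.
Variable V : pred code.

Definition walkc (A : code) (s : nat -> 'I_n) t : code :=
  [ffun x => A x (+) odd (\sum_(0 <= i < t) (s i == x))].

Lemma walkc0 A s : walkc A s 0 = A.
Proof. by apply/ffunP => x; rewrite ffunE big_geq // addbF. Qed.

Lemma walkcS A s t : walkc A s t.+1 = flip (s t) (walkc A s t).
Proof.
apply/ffunP => x; rewrite flipE !ffunE big_nat_recr //= oddD -addbA.
by rewrite [x == _]eq_sym; case: (s t == x).
Qed.

Lemma walkc_ext A s r t : (forall i, i < t -> s i = r i) -> walkc A s t = walkc A r t.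
Proof.
move=> H; apply/ffunP => x; rewrite !ffunE; congr (_ (+) odd _).
by apply: eq_big_nat => i /andP [_ Hi]; rewrite H.
Qed.

Lemma walkc_seg A s a b x : a <= b ->
  walkc A s b x = walkc A s a x (+) odd (\sum_(a <= i < b) (s i == x)).
Proof. by move=> Hab; rewrite !ffunE (big_cat_nat _ (n:=a)) //= oddD addbA. Qed.

Definition inj_on (s : nat -> 'I_n) k := forall a b, a < k -> b < k -> s a = s b -> a = b.

Definition Bridge A s k := [/\ inj_on s k, s k = s 0,
  (forall j, j <= k.+1 -> V (walkc A s j)) &
  (forall j, 0 < j <= k -> ~~ V (flip (s j) (walkc A s j.-1)))].

Lemma Bridge_ext A s r k : (forall i, i <= k -> s i = r i) -> Bridge A s k -> Bridge A r k.
Proof.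
move=> H [Hi Hk Hv Hs]; split.
- move=> a b Ha Hb; rewrite -(H a) ?(ltnW Ha) // -(H b) ?(ltnW Hb) //; exact: Hi.
- by rewrite -(H k) // -(H 0).
- move=> j Hj; rewrite -(@walkc_ext _ s); first exact: Hv.
  move=> i Hij; apply: H; rewrite -ltnS; exact: (leq_trans Hij Hj).
- move=> j /andP [Hj0 Hj]; rewrite -(H j) //.
  rewrite -(@walkc_ext _ s); first by apply: Hs; rewrite Hj0.
  move=> i Hij; apply: H; apply: leq_trans (ltnW Hij) _; exact: leq_trans (leq_pred j) Hj.
Qed.

Lemma cnt s k m j : inj_on s k -> m < k -> j <= k -> \sum_(0 <= i < j) (s i == s m) = (m < j).
Proof.
move=> Hi Hm; elim: j => [|j IH] Hj; first by rewrite big_geq.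
rewrite big_nat_recr //= IH ?(ltnW Hj) //.
case: (eqVneq j m) => [->|Hne]; first by rewrite eqxx; lia.
have -> : (s j == s m) = false.
  apply/negbTE/eqP => Heq; have := Hi _ _ Hj Hm Heq; by move/eqP; rewrite (negbTE Hne).
rewrite addn0; move/eqP: Hne; lia.
Qed.

Definition IHk k := forall k' A s, 0 < k' -> k' < k -> ~ Bridge A s k'.

Lemma ladder k A s : IHk k -> Bridge A s k ->
  forall d j m, j + d + 2 = m -> m <= k -> (0 < j) || (m < k) ->
  ~~ V (flip (s m.-1) (walkc A s j)).
Proof.
move=> IH [Hi Hk Hv Hs] d; elim: d => [|d IHd] j m Hm Hmk Hjm.
  by have := Hs m.-1; rewrite (_ : m.-1.-1 = j); [apply; lia | lia].
apply/negP => HY.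
pose r := fun i => if i is i'.+1 then s (j + i') else s m.-1.
have Hw : forall i, walkc (flip (s m.-1) (walkc A s j)) r i.+1 = walkc A s (j + i).
  elim => [|i IHi]; first by rewrite walkcS walkc0 /= flipK addn0.
  by rewrite walkcS IHi /= addnS walkcS.
have Hd3 : d + 3 < k by move: Hjm; clear -Hm Hmk; lia.
have H3 : 0 < d + 3 by rewrite addn3.
apply: (IH (d+3) (flip (s m.-1) (walkc A s j)) r H3 Hd3).
split.
- move=> a b Ha Hb; case: a Ha => [|a] Ha; case: b Hb => [|b] Hb //= Heq.
  + by have := Hi _ _ _ _ Heq; lia.
  + by have := Hi _ _ _ _ Heq; lia.
  + by have := Hi _ _ _ _ Heq; lia.
- rewrite /r addn3 /=; f_equal; move: Hm; clear; lia.
- case => [|j'] Hj'; first by rewrite walkc0.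
  rewrite Hw; apply: Hv; lia.
- case => [//|j'] Hj'; case: j' Hj' => [|j'] Hj' /=.
    rewrite walkc0 addn0 flipC -walkcS.
    by apply: (IHd j.+1 m) => //; lia.
  rewrite Hw /=.
  have := Hs (j + j'.+1); rewrite (_ : (j + j'.+1).-1 = j + j') //; last by lia.
  by apply; lia.
Qed.

Lemma sum_ex (P : pred nat) a b : \sum_(a <= i < b) (P i : nat) != 0 -> exists i, a <= i < b /\ P i.
Proof.
elim: b => [|b IH]; first by rewrite big_geq.
case: (leqP a b) => Hab; last by rewrite big_geq.
rewrite big_nat_recr //=; case: (boolP (P b)) => Hb; first by exists b; rewrite Hab ltnSn.
rewrite addn0 => /IH [i [Hi Pi]]; exists i; split => //; lia.
Qed.

Hypothesis Hstep : forall x y, V x -> V y -> x != y -> exists i, x i != y i /\ V (flip i x).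

Lemma rot k A s : 2 < k -> IHk k -> Bridge A s k ->
  Bridge (flip (s k.-1) A) (fun i => if i is i'.+1 then s i' else s k.-1) k.
Proof.
move=> Hk3 IH Hb; have Hlad := ladder IH Hb; case: Hb => Hi Hk Hv Hs.
set r := fun i => if i is i'.+1 then s i' else s k.-1.
have Hw : forall i, walkc (flip (s k.-1) A) r i.+1 = walkc A s i.
  elim => [|i IHi]; first by rewrite walkcS !walkc0 /r flipK.
  by rewrite walkcS IHi [in RHS]walkcS.
have HA : V (flip (s k.-1) A).
  have HV0 : V A by have := Hv 0; rewrite walkc0; apply.
  have HVB : V (walkc A s k.+1) by apply: Hv.
  have Hcnt : forall m, m < k -> \sum_(0 <= i < k.+1) (s i == s m) = 1 + (m == 0).
    move=> m Hm; rewrite big_nat_recr //= (cnt Hi Hm (leqnn k)) Hm Hk; congr addn.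
    case: (eqVneq m 0) => [->|Hm0]; first by rewrite eqxx.
    case: eqP => [Heq|//].
    have := Hi 0 m ltac:(lia) Hm Heq; move/eqP: Hm0; lia.
  have Hne : A != walkc A s k.+1.
    apply/negP => /eqP /ffunP /(_ (s k.-1)); rewrite ffunE Hcnt; last by lia.
    have -> : (k.-1 == 0) = false by case: eqP => //; lia.
    by case: (A _).
  have [y [Hy HVy]] := Hstep HV0 HVB Hne.
  move: Hy; rewrite ffunE; case: (eqVneq (\sum_(0 <= i < k.+1) (s i == y)) 0) => [->|Hsum].
    by rewrite addbF eqxx.
  move=> Hy; have [i [/andP [_ Hik] /eqP Hsi]] := sum_ex Hsum.
  have [m [Hm Hsm]] : exists m, m < k /\ s m = y.
    case: (ltngtP i k) => Hik'; [by exists i | lia | by exists 0; rewrite -Hsi Hik' Hk; split => //; lia].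
  case: (ltngtP m k.-1) => Hmk; last 1 first.
  - by rewrite -Hsm Hmk in HVy.
  - case: (eqVneq m 0) => [Hm0|Hm0].
      by move: Hy; rewrite -Hsm Hcnt // Hm0 /= addbF eqxx.
    have Hl1 : 0 + m.-1 + 2 = m.+1 by lia.
    have Hl2 : m.+1 <= k by lia.
    have Hl3 : (0 < 0) || (m.+1 < k) by apply/orP; right; lia.
    by have := Hlad (m.-1) 0 m.+1 Hl1 Hl2 Hl3; rewrite walkc0 /= Hsm HVy.
  - lia.
split.
- move=> a b Ha Hb; case: a Ha => [|a] Ha; case: b Hb => [|b] Hb //= Heq.
  + by have := Hi k.-1 b ltac:(lia) ltac:(lia) Heq; lia.
  + by have := Hi a k.-1 ltac:(lia) ltac:(lia) Heq; lia.
  + by have := Hi a b ltac:(lia) ltac:(lia) Heq; lia.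
- by rewrite /r; case: (k) Hk3.
- case => [|j] Hj; first by rewrite walkc0.
  by rewrite Hw; apply: Hv; lia.
- case => [//|[|j]] Hj /=.
    rewrite walkc0 flipC.
    have Hl1 : 1 + (k - 3) + 2 = k by lia.
    by have := Hlad (k - 3) 1 k Hl1 (leqnn k) isT; rewrite walkcS walkc0.
  rewrite Hw; have := Hs j.+1; apply; lia.
Qed.

Section Cyc.
Variables (k : nat) (A : code) (s : nat -> 'I_n).
Hypothesis Hk3 : 2 < k.
Hypothesis IH : IHk k.
Hypothesis HB : Bridge A s k.

Let sp i := s (i %% k).
Let W t := walkc A sp t.

Lemma Hk0 : 0 < k. Proof. by apply: leq_trans Hk3. Qed.

Lemma sp_per i : sp (i + k) = sp i.
Proof. by rewrite /sp modnDr. Qed.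

Lemma sp_inj a b : sp a = sp b -> a %% k = b %% k.
Proof. by case: HB => Hi _ _ _ Heq; apply: Hi => //; rewrite ltn_mod Hk0. Qed.

Lemma slide (F : nat -> nat) a : (forall i, F (i + k) = F i) ->
  \sum_(a <= i < a + k) F i = \sum_(0 <= i < k) F i.
Proof.
move=> HF; elim: a => [|a IHa]; first by rewrite add0n.
rewrite -IHa addSn.
have E1 : \sum_(a <= i < (a+k).+1) F i = F a + \sum_(a.+1 <= i < (a+k).+1) F i.
  by rewrite big_ltn // ltnS leq_addr.
have E2 : \sum_(a <= i < (a+k).+1) F i = \sum_(a <= i < a+k) F i + F (a+k).
  by rewrite big_nat_recr //= leq_addr.
have E3 := HF a; lia.
Qed.

Lemma W_per t : W (t + k + k) = W t.
Proof.
apply/ffunP => x; rewrite /W -addnA (walkc_seg _ _ _ (leq_addr (k + k) t)).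
rewrite (big_cat_nat _ (n := t + k)) ?leq_addr //=; last by rewrite addnA leq_addr.
rewrite slide; last by move=> i; rewrite sp_per.
rewrite addnA slide; last by move=> i; rewrite sp_per.
by rewrite oddD addbb addbF.
Qed.

Lemma Win0 : Bridge (W 0) (fun i => sp (0 + i)) k.
Proof.
case: (HB) => Hi Hk Hv Hs.
rewrite /W walkc0; apply: Bridge_ext HB => i Hi'; rewrite add0n /sp.
case: (ltngtP i k) => Hik; [by rewrite modn_small | lia | by rewrite Hik modnn Hk].
Qed.

Lemma Wstep t : W t.+1 = flip (sp t) (W t).
Proof. exact: walkcS. Qed.

Lemma Win_down t : Bridge (W t.+1) (fun i => sp (t.+1 + i)) k -> Bridge (W t) (fun i => sp (t + i)) k.
Proof.
move=> Hb; have := rot Hk3 IH Hb.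
have E : t.+1 + k.-1 = t + k by have := Hk0; lia.
have -> : sp (t.+1 + k.-1) = sp t by rewrite /sp E modnDr.
rewrite Wstep flipK; apply: Bridge_ext => -[|i] Hi /=.
  by rewrite addn0.
by rewrite addnS.
Qed.

Lemma Win2k : Bridge (W (k + k)) (fun i => sp (k + k + i)) k.
Proof.
rewrite -{1}(add0n k) W_per; apply: Bridge_ext Win0 => i _.
by rewrite add0n addnC addnA sp_per sp_per.
Qed.

Lemma Win t : t <= k + k -> Bridge (W t) (fun i => sp (t + i)) k.
Proof.
move=> Ht; move Hr : (k + k - t) => r; elim: r t Ht Hr => [|r IHr] t Ht Hr.
  have -> : t = k + k by lia.
  exact: Win2k.
apply: Win_down; apply: IHr; lia.
Qed.

Lemma W_off t x : (forall j, j < k -> s j != x) -> W t x = A x.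
Proof.
move=> H; rewrite /W ffunE big_nat_cond big1 ?addbF // => i _.
by rewrite /sp (negbTE (H _ _)) // ltn_mod Hk0.
Qed.

Lemma ham_W a d : d <= k -> ham (W a) (W (a + d)) = d.
Proof.
elim: d => [|d IHd] Hd; first by rewrite addn0; apply/eqP; rewrite ham0.
rewrite addnS Wstep ham_flip_same ?IHd //; first by lia.
rewrite /W (walkc_seg _ _ _ (leq_addr d a)) big_nat_cond big1 ?addbF // => i /andP [/andP [Hai Hid] _].
apply/eqP; rewrite eqb0; apply/negP => /eqP /sp_inj Heq.
have := @mod_shift k i (a + d - i); rewrite (_ : i + (a + d - i) = a + d); last by lia.
rewrite Heq eqxx => H; have : 0 < a + d - i < k by apply/andP; split; lia.
by move/H.
Qed.

Lemma W_inj a b : a < k + k -> b < k + k -> W a = W b -> a = b.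
Proof.
wlog Hab : a b / a <= b.
  by move=> Hw Ha Hb Heq; case: (leqP a b) => H; [apply: Hw | symmetry; apply: Hw] => //; apply: ltnW.
move=> Ha Hb Heq; have Hz : forall x : code, ham x x = 0 by move=> x; apply/eqP; rewrite ham0.
case: (leqP (b - a) k) => Hd.
  have := ham_W a Hd; rewrite subnKC // Heq Hz; lia.
have Hd' : a + k + k - b <= k by lia.
have := ham_W b Hd'; rewrite subnKC; last by lia.
rewrite W_per Heq Hz; lia.
Qed.

Lemma nbr t j : 0 < t <= k + k -> j < k -> V (flip (s j) (W t)) ->
  flip (s j) (W t) = W t.+1 \/ flip (s j) (W t) = W t.-1.
Proof.
move=> /andP [Ht0 Ht] Hj HV; have Hb := Win Ht; have Hlad := ladder IH Hb.
have [r [Hr Htr]] := mod_find t Hj.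
have Hsj : s j = sp (t + r) by rewrite /sp Htr.
rewrite Hsj in HV *.
case: (eqVneq r 0) => [Hr0|Hr0].
  by left; rewrite Hr0 addn0 Wstep.
case: (eqVneq r k.-1) => [Hrk|Hrk].
  right; have E : t + r = t.-1 + k by have := Hk0; lia.
  rewrite E sp_per; have {2}-> : t = (t.-1).+1 by lia.
  by rewrite Wstep flipK.
have H1 : 0 + r.-1 + 2 = r.+1 by lia.
have H2 : r.+1 <= k by lia.
have H3 : (0 < 0) || (r.+1 < k) by apply/orP; right; have := Hk0; lia.
by have := Hlad _ _ _ H1 H2 H3; rewrite walkc0 /= HV.
Qed.

Lemma VW t : t <= k + k -> V (W t).
Proof. by move=> Ht; case: (Win Ht) => _ _ Hv _; have := Hv 0 isT; rewrite walkc0. Qed.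

Lemma W2k : W (k + k) = W 0.
Proof. by rewrite -{1}(add0n k) W_per. Qed.

Lemma nbr_idx a j : a < k + k -> j < k -> V (flip (s j) (W a)) ->
  exists b, [/\ b < k + k, flip (s j) (W a) = W b & (b == (a.+1) %% (k + k)) || (a == (b.+1) %% (k + k))].
Proof.
move=> Ha Hj HV; have Hk := Hk0.
case: (posnP a) => [Ha0|Ha0].
  subst a; rewrite -W2k in HV *.
  have Hkk : 0 < k + k <= k + k by apply/andP; split; lia.
  case: (nbr Hkk Hj HV) => ->.
    have E : (k + k).+1 = 1 + k + k by lia.
    exists 1; split => //; first by lia.
      by rewrite E W_per.
    by rewrite modn_small //; lia.
  exists (k + k).-1; split => //; first by lia.
  by apply/orP; right; rewrite prednK ?modnn //; lia.
have Hkk : 0 < a <= k + k by apply/andP; split; lia.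
case: (nbr Hkk Hj HV) => ->.
  case: (ltngtP a.+1 (k + k)) => Ha1; first by exists a.+1; rewrite modn_small // eqxx.
    by lia.
  by exists 0; rewrite Ha1 W2k modnn; split => //; lia.
exists a.-1; split => //; first by lia.
by apply/orP; right; rewrite prednK // modn_small.
Qed.

Definition offS (x : 'I_n) := [forall j : 'I_k, s j != x].

Lemma W_off' t x : offS x -> W t x = A x.
Proof. by move=> /forallP H; apply: W_off => j Hj; exact: (H (Ordinal Hj)). Qed.

Lemma inS_of x : ~~ offS x -> exists j, j < k /\ s j = x.
Proof. by rewrite negb_forall => /existsP [j /negPn /eqP H]; exists j. Qed.

Lemma hull z : V z -> (forall x, offS x -> z x = A x) -> exists b, b < k + k /\ z = W b.
Proof.
move Hh : (ham (W 0) z) => h; elim: h z Hh => [|h IHh] z Hh HV Hoff.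
  exists 0; split; first by rewrite addn_gt0 Hk0.
  by apply/esym/eqP; rewrite -ham0 Hh.
have Hne : z != W 0.
  apply/eqP => Hz; move: Hh; rewrite Hz (_ : ham (W 0) (W 0) = 0) //; apply/eqP; by rewrite ham0.
have HV0 : V (W 0) by apply: VW.
have [i [Hi HVi]] := Hstep HV HV0 Hne.
have HiS : ~~ offS i by apply: contra Hi => Ho; rewrite Hoff // W_off'.
have [j [Hj Hsj]] := inS_of HiS.
have Hi' : W 0 i != z i by rewrite eq_sym.
have Hh' : ham (W 0) (flip i z) = h by have := ham_flip_diff Hi'; rewrite Hh => -[].
have Hoff' : forall x, offS x -> flip i z x = A x.
  move=> x Hx; rewrite flipE Hoff //; case: (eqVneq x i) => [Hxi|]; last by rewrite addbF.
  by move: HiS; rewrite -Hxi Hx.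
have [b [Hb Hzb]] := IHh _ Hh' HVi Hoff'.
have Hz : z = flip (s j) (W b) by rewrite -Hzb Hsj flipK.
rewrite Hz in HV; have [b' [Hb' Heq _]] := nbr_idx Hb Hj HV.
by exists b'; rewrite Hz.
Qed.

Lemma adj_idx a b : a < k + k -> b < k + k -> ham (W a) (W b) = 1 ->
  (b == (a.+1) %% (k + k)) || (a == (b.+1) %% (k + k)).
Proof.
move=> Ha Hb /ham1 [i Hi].
have HiS : ~~ offS i.
  apply/negP => Ho; have := W_off' b Ho; rewrite Hi flipE W_off' // eqxx.
  by case: (A i).
have [j [Hj Hsj]] := inS_of HiS.
have HV : V (flip (s j) (W a)) by rewrite Hsj -Hi; apply: VW; lia.
have [b' [Hb' Heq Hrel]] := nbr_idx Ha Hj HV.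
by rewrite Hsj -Hi in Heq; have := W_inj Hb Hb' Heq => ->.
Qed.
End Cyc.

End Comb.


Lemma path_iota (T : Type) (e : rel T) (g : nat -> T) a m :
  (forall t, a <= t < a + m -> e (g t) (g t.+1)) -> path e (g a) (map g (iota a.+1 m)).
Proof.
elim: m a => [//|m IH] a H /=; rewrite H ?IH //; first by move=> t Ht; apply: H; lia.
lia.
Qed.

Section Final.
Variables (T : finType) (e : rel T) (n : nat) (f : T -> {ffun 'I_n -> bool}).
Hypothesis esym : symmetric e.
Hypothesis eirr : irreflexive e.
Hypothesis econn : connected e.
Hypothesis Hf : forall u v, dist e u v = ham (f u) (f v).
Hypothesis Hconv : forall c : seq T, convex_cycle e c -> size c = 4.

Local Notation V := (inV f).
Let Hstep := vstep eirr econn Hf.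

Lemma next_iota (g : nat -> T) N a : a < N -> uniq (map g (iota 0 N)) ->
  next (map g (iota 0 N)) (g a) = g (a.+1 %% N).
Proof.
move=> Ha Hu; rewrite next_nth.
have Hin : g a \in map g (iota 0 N) by apply: map_f; rewrite mem_iota.
rewrite Hin; case: N Ha Hu Hin => [//|N] Ha Hu Hin.
have -> : index (g a) (map g (iota 0 N.+1)) = a.
  have := @index_uniq _ (g 0) a (map g (iota 0 N.+1)); rewrite size_map size_iota.
  by rewrite (nth_map 0) ?size_iota // nth_iota // add0n => ->.
rewrite /=.
case: (ltngtP a N) => HaN; first by rewrite (nth_map 0) ?size_iota // nth_iota // modn_small.
  by lia.
by rewrite nth_default ?size_map ?size_iota ?HaN // modnn.
Qed.

Lemma path_sub (c : seq T) u p : path e u p -> all (fun x => x \in c) (u :: p) ->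
  (forall x y, x \in c -> y \in c -> e x y -> cycle_edge c x y) -> path (cycle_edge c) u p.
Proof.
elim: p u => [//|x p IH] u /= /andP [Hux Hp] /and3P [Hu Hx Hall] H.
by rewrite H // IH //= Hx.
Qed.

Lemma ham_split u p w : path e u p -> w \in u :: p ->
  ham (f u) (f w) + ham (f w) (f (last u p)) <= size p.
Proof.
elim: p u => [|x p IH] u /=.
  by rewrite inE => _ /eqP ->; rewrite (_ : ham _ _ = 0) //; apply/eqP; rewrite ham0.
move=> /andP [Hux Hp]; rewrite inE => /orP [/eqP ->|Hw].
  rewrite (_ : ham (f u) (f u) = 0); last by apply/eqP; rewrite ham0.
  by rewrite add0n (path_ham Hf (p := x :: p)) //= Hux.
have := IH x Hp Hw; have := edge_ham eirr Hf Hux; have := ham_tri (f u) (f x) (f w); lia.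
Qed.

Theorem core k : forall A s, 0 < k -> Bridge V A s k -> False.
Proof.
elim/ltn_ind: k => k IHs A s Hk0 HB.
have IH : IHk V k by move=> k' A' s' H0 H1 HB'; exact: IHs k' H1 A' s' H0 HB'.
case: (ltnP k 3) => Hk3.
  case: HB => Hi Hks Hv Hs.
  case: k Hk0 Hk3 IHs IH Hi Hks Hv Hs => [//|[|[|//]]] _ _ _ _ Hi Hks Hv Hs.
    by have := Hs 1 isT; rewrite walkc0 Hks -(walkc0 A s) -walkcS Hv.
  have := Hs 1 isT; have := Hv 3 isT; rewrite !walkcS walkc0 Hks flipC flipK.
  by move=> ->.
have Hk3' : 2 < k := Hk3.
pose W t := walkc A (fun i => s (i %% k)) t.
have HVW : forall t, t <= k + k -> V (W t) := VW Hstep Hk3' IH HB.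
have [d _] : exists d : T, f d = W 0 by apply/inVP; apply: HVW.
pose pre x := odflt d [pick u | f u == x].
have fpre : forall x, V x -> f (pre x) = x.
  move=> x /inVP [u Hu]; rewrite /pre; case: pickP => [v /eqP //|H].
  by have := H u; rewrite /= Hu eqxx.
pose g t := pre (W t).
have Hg : forall t, t <= k + k -> f (g t) = W t by move=> t Ht; apply: fpre; apply: HVW.
have Hg2k : g (k + k) = g 0 by rewrite /g /W W2k.
pose cs := map g (iota 0 (k + k)).
have Huniq : uniq cs.
  rewrite map_inj_in_uniq ?iota_uniq // => a b; rewrite !mem_iota !add0n => Ha Hb Hab.
  apply: (W_inj Hk3' HB Ha Hb); change (W a = W b); rewrite -Hg ?Hab -?Hg //; lia.
have Hin : forall w, w \in cs -> exists2 a, a < k + k & w = g a.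
  by move=> w /mapP [a]; rewrite mem_iota add0n => Ha ->; exists a.
have Hcv : convex_cycle e cs.
  split.
    split => //; first by rewrite size_map size_iota; lia.
    have EM : k + k = ((k + k).-1).+1 by lia.
    rewrite /cs EM /= -{2}Hg2k EM -map_rcons -cats1.
    have -> : iota 1 (k + k).-1 ++ [:: (k + k).-1.+1] = iota 1 (k + k).
      set M := (k + k).-1; have -> : k + k = M + 1 by rewrite /M; lia.
      by rewrite iotaD /= add1n.
    apply: path_iota => u Hu; apply: (ham_edge econn Hf).
    rewrite !Hg; try lia.
    by rewrite /W walkcS ham_flip1.
  move=> u v p Hu Hv [Hp [Hl Hs]].
  have [a Ha Hua] := Hin _ Hu; have [b Hb Hvb] := Hin _ Hv; subst u.
  have Hoffc : forall c x, c <= k + k -> offS k s x -> f (g c) x = A x.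
    by move=> c x Hc Hx; rewrite Hg // (W_off' A Hk3').
  have Hall : all (fun x => x \in cs) (g a :: p).
    apply/allP => w Hw; have Hsp := ham_split Hp Hw; rewrite Hl Hs Hf in Hsp.
    have Hoff : forall x, offS k s x -> f w x = A x.
      move=> x Hx; apply/eqP; apply/negPn/negP => Hne.
      have H1 : f (g a) x = f v x by rewrite Hvb !Hoffc //; lia.
      have H2 : f w x != f (g a) x by rewrite Hoffc //; lia.
      have := ham_tri2 H1 H2; lia.
    have [c [Hc Hwc]] := hull Hstep Hk3' IH HB (inVf f w) Hoff.
    have -> : w = g c by apply: (f_inj Hf); rewrite Hg; [exact: Hwc | lia].
    by apply: map_f; rewrite mem_iota.
  split => //; apply: path_sub Hp Hall _ => x y Hx Hy Hxy; rewrite /cycle_edge Hx Hy /=.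
  have [a' Ha' Hxa] := Hin _ Hx; have [b' Hb' Hyb] := Hin _ Hy.
  have Hh : ham (W a') (W b') = 1 by rewrite -!Hg; [rewrite -Hxa -Hyb (edge_ham eirr Hf Hxy) | lia | lia].
  have := adj_idx Hstep Hk3' IH HB Ha' Hb' Hh.
  rewrite Hxa Hyb !next_iota //; case/orP => /eqP ->; by rewrite eqxx ?orbT.
have := Hconv Hcv; rewrite size_map size_iota; lia.
Qed.

End Final.


Theorem mainTheorem5 (T : finType) (e : rel T) :
  symmetric e -> irreflexive e -> partial_cube e ->
  (forall c : seq T, convex_cycle e c -> size c = 4) ->
  forall (v0 : T) (p : seq T),
    1 <= size p -> path e v0 p -> uniq (v0 :: p) ->
    typeI e v0 p ->
    shortest_path e v0 p (last v0 p).
Proof.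
move=> esym eirr [econn [n [f Hf0]]] Hconv v0 p Hl1 Hp _ [_ _ Hint].
have Hf : forall u v, dist e u v = ham (f u) (f v) by move=> u v; rewrite Hf0 qdist.
set l := size p in Hl1 Hint *.
pose v i := nth v0 (v0 :: p) i.
pose a i := f (v i).
have Hedge : forall i, i < l -> e (v i) (v i.+1).
  by move=> i Hi; move/(pathP v0): Hp => H; apply: H.
have Hcoord : forall i, i < l -> exists c, a i.+1 = flip c (a i).
  by move=> i Hi; apply: ham1; apply: (edge_ham eirr Hf); apply: Hedge.
have [c0 _] := Hcoord 0 Hl1.
pose c i := odflt c0 [pick x | a i x != a i.+1 x].
have Hc : forall i, i < l -> a i.+1 = flip (c i) (a i).
  move=> i Hi; have [x Hx] := Hcoord i Hi; rewrite Hx; congr flip.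
  rewrite /c; case: pickP => [y /= Hy|H]; last by have := H x; rewrite /= Hx flipE eqxx; case: (a i x).
  by move: Hy; rewrite Hx flipE; case: (eqVneq y x) => // _; rewrite addbF eqxx.
have Hwalk : forall i r, i + r <= l -> walkc (a i) (fun r => c (i + r)) r = a (i + r).
  move=> i; elim => [|r IH] Hir; first by rewrite walkc0 addn0.
  by rewrite walkcS IH ?addnS ?Hc //; lia.
have Hlast : last v0 p = v l by rewrite /v /l; have := nth_last v0 (v0 :: p) => /= ->.
split => //; split => //; rewrite Hlast Hf.
case: (boolP [exists j : 'I_l, [exists i : 'I_j, c i == c j]]) => [Hex|Hnex]; last first.
  have Hinj : forall x y, x < l -> y < l -> c x = c y -> x = y.
    move=> x y Hx Hy Hxy; apply/eqP; apply/negPn/negP => Hne.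
    move/negP: Hnex; apply; apply/existsP.
    case: (ltngtP x y) => Hxy'; last by move: Hne; rewrite Hxy' eqxx.
      by exists (Ordinal Hy); apply/existsP; exists (Ordinal Hxy'); rewrite /= Hxy.
    by exists (Ordinal Hx); apply/existsP; exists (Ordinal Hxy'); rewrite /= Hxy.
  have : forall m, m <= l -> ham (a 0) (a m) = m.
    elim => [|m IH] Hm; first by apply/eqP; rewrite ham0.
    rewrite Hc // ham_flip_same ?IH //; first lia.
    have := Hwalk 0 m; rewrite add0n => <-; last by lia.
    rewrite ffunE big_nat_cond big1 ?addbF // => i /andP [/andP [_ Hi] _].
    apply/eqP; rewrite eqb0 add0n; apply/negP => /eqP Heq.
    have := Hinj i m ltac:(lia) ltac:(lia) Heq; lia.
  by move/(_ l (leqnn l)).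
exfalso.
have HP : exists j, (j < l) && [exists i : 'I_j, c i == c j].
  by case/existsP: Hex => j Hj; exists j; rewrite ltn_ord.
case: (ex_minnP HP) => j /andP [Hjl /existsP [[i Hij] /= /eqP Hcij]] Hmin.
apply: (core eirr econn Hf Hconv (k := j - i) (A := a i) (s := fun r => c (i + r))); first by lia.
split.
- move=> x y Hx Hy Hxy; apply/eqP; apply/negPn/negP => Hne.
  wlog Hlt : x y Hx Hy Hxy Hne / x < y.
    move=> Hw; case: (ltngtP x y) => H; [exact: Hw H | | by move: Hne; rewrite H eqxx].
    by apply: (Hw y x) => //; rewrite eq_sym.
  have : j <= i + y.
    apply: Hmin; apply/andP; split; first by lia.
    have Hxy' : i + x < i + y by rewrite ltn_add2l.
    by apply/existsP; exists (Ordinal Hxy'); rewrite /= Hxy.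
  lia.
- by rewrite subnKC ?(ltnW Hij) // addn0.
- move=> r Hr; rewrite Hwalk; last by lia.
  exact: inVf.
- move=> r /andP [Hr0 Hr]; rewrite Hwalk; last by lia.
  have Hir : 1 <= i + r <= l.-1 by apply/andP; split; lia.
  have [H _] := Hint _ Hir.
  apply: contra H => HV; apply: (inF_sq econn Hf (c := c (i + r))).
  + by apply: Hedge; lia.
  + by apply: Hc; lia.
  + by rewrite (_ : (i + r).-1 = i + r.-1) //; lia.
Qed.
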